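(* Let $C\xleftarrow{f}M\xrightarrow{g}D$ be a span of sets, regarded as the linear $(C\mathcal y,D\mathcal y)$-bicomodule $M\mathcal y$. Then the following $(D\mathcal y,C\mathcal y)$-bicomodules are isomorphic: (i) the transpose span $D\xleftarrow{g}M\xrightarrow{f}C$; (ii) the dual $\big((M\mathcal y)^{\dagger r}\big)^\vee$ of the right adjoint of $M\mathcal y$ in $\mathbb C\mathbf{at}^\sharp$; (iii) the left adjoint $\big((M\mathcal y)^\vee\big)^{\dagger l}$ of the dual of $M\mathcal y$ in $\mathbb C\mathbf{at}^\sharp$.
   Context: $\mathbb C\mathbf{at}^\sharp$: bicategory of comonoids in $(\mathbf{Poly},\mathcal y,\triangleleft)$ (small categories), bicomodules, bicomodule maps, horizontal composition $\triangleleft_d$. $C\mathcal y$ is the discrete category on a set $C$. A span $C\leftarrow M\to D$ is the same as a $(C\mathcal y,D\mathcal y)$-bicomodule with linear carrier $M\mathcal y$; its prafunctor $D\text{-}\mathbf{Set}\to C\text{-}\mathbf{Set}$ is $\Sigma_f\Delta_g$. Linear bicomodules between discrete categories are exactly the left adjoints in $\mathbb C\mathbf{at}^\sharp$, with conjunctive right adjoints; $^{\dagger r}$ and $^{\dagger l}$ denote right and left adjoints. The dual $m^\vee:=[m,\bot]_{C\mathcal y,D\mathcal y}$, where $\bot=CD\mathcal y$ is the terminal span and $[-,-]$ the local internal hom, exchanges linear and conjunctive bicomodules: $(\sum_{a\in C}M_a\mathcal y)^\vee\cong\sum_{a\in C}\mathcal y^{M_a}$ and conversely; in prafunctor terms it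 sends $\Sigma_f\Delta_g$ to $\Pi_f\Delta_g$ and vice versa. *)

(* Defs.v *)
(* A (C y, D y)-bicomodule: a polynomial whose positions lie over C and whose
   directions are labelled by D.  Its prafunctor goes D-Set -> C-Set. *)
Record bicom (C D : Type) : Type := Bicom {
  bpos : Type;
  bbase : bpos -> C;
  bdir : bpos -> Type;
  blab : forall i, bdir i -> D }.
Arguments Bicom {C D}.
Arguments bpos {C D}. Arguments bbase {C D}. Arguments bdir {C D}. Arguments blab {C D}.

Record bmor {C D} (p q : bicom C D) : Type := Bmor {
  mpos : bpos p -> bpos q;
  mbase : forall i, bbase q (mpos i) = bbase p i;
  mdir : forall i, bdir q (mpos i) -> bdir p i;
  mlab : forall i e, blab p i (mdir i e) = blab q (mpos i) e }.
Arguments Bmor {C D p q}.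
Arguments mpos {C D p q}. Arguments mbase {C D p q}.
Arguments mdir {C D p q}. Arguments mlab {C D p q}.

Definition bmor_eq {C D} {p q : bicom C D} (a b : bmor p q) : Prop :=
  exists H : forall i, mpos a i = mpos b i,
    forall i (e : bdir q (mpos a i)),
      mdir a i e = mdir b i (eq_rect _ (bdir q) e _ (H i)).

Definition bmid {C D} (p : bicom C D) : bmor p p :=
  Bmor (fun i => i) (fun i => eq_refl) (fun i e => e) (fun i e => eq_refl).

(* vertical composition, diagrammatic order: a then b *)
Definition bmcomp {C D} {p q r : bicom C D} (a : bmor p q) (b : bmor q r) : bmor p r :=
  Bmor (fun i => mpos b (mpos a i))
       (fun i => eq_trans (mbase b (mpos a i)) (mbase a i))
       (fun i e => mdir a i (mdir b (mpos a i) e))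
       (fun i e => eq_trans (mlab a i _) (mlab b _ e)).

Definition biso {C D} (p q : bicom C D) : Prop :=
  exists (f : bmor p q) (g : bmor q p),
    bmor_eq (bmcomp f g) (bmid p) /\ bmor_eq (bmcomp g f) (bmid q).

Record span (C D : Type) : Type := Span {
  apex : Type;
  sleft : apex -> C;
  sright : apex -> D }.
Arguments Span {C D}. Arguments apex {C D}.
Arguments sleft {C D}. Arguments sright {C D}.

(* the span C <-f- M -g-> D as the linear bicomodule M y *)
Definition linear {C D} (S : span C D) : bicom C D :=
  Bicom (apex S) (sleft S) (fun _ => unit) (fun m _ => sright S m).

Definition transpose {C D} (S : span C D) : span D C :=
  Span (apex S) (sright S) (sleft S).

Definition bid (C : Type) : bicom C C :=
  Bicom C (fun c => c) (fun _ => unit) (fun c _ => c).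

Definition bcomp {C D E} (p : bicom C D) (q : bicom D E) : bicom C E :=
  Bicom { i : bpos p & forall e : bdir p i, { j : bpos q | bbase q j = blab p i e } }
        (fun x => bbase p (projT1 x))
        (fun x => { e : bdir p (projT1 x) & bdir q (proj1_sig (projT2 x e)) })
        (fun x d => blab q (proj1_sig (projT2 x (projT1 d))) (projT2 d)).

Definition whiskerR {C D E} {p p' : bicom C D} (a : bmor p p') (q : bicom D E)
  : bmor (bcomp p q) (bcomp p' q) :=
  Bmor (p := bcomp p q) (q := bcomp p' q)
    (fun x => existT _ (mpos a (projT1 x))
       (fun e' => exist _ (proj1_sig (projT2 x (mdir a (projT1 x) e')))
          (eq_trans (proj2_sig (projT2 x (mdir a (projT1 x) e')))
                    (mlab a (projT1 x) e'))))
    (fun x => mbase a (projT1 x))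
    (fun x d => existT _ (mdir a (projT1 x) (projT1 d)) (projT2 d))
    (fun x d => eq_refl).

Definition whiskerL {C D E} (p : bicom C D) {q q' : bicom D E} (b : bmor q q')
  : bmor (bcomp p q) (bcomp p q') :=
  Bmor (p := bcomp p q) (q := bcomp p q')
    (fun x => existT _ (projT1 x)
       (fun e => exist _ (mpos b (proj1_sig (projT2 x e)))
          (eq_trans (mbase b _) (proj2_sig (projT2 x e)))))
    (fun x => eq_refl)
    (fun x d => existT _ (projT1 d) (mdir b _ (projT2 d)))
    (fun x d => mlab b _ (projT2 d)).

Definition lunit {C D} (p : bicom C D) : bmor (bcomp (bid C) p) p :=
  Bmor (p := bcomp (bid C) p) (q := p)
    (fun x => proj1_sig (projT2 x tt))
    (fun x => proj2_sig (projT2 x tt))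
    (fun x e => existT _ tt e)
    (fun x e => eq_refl).

Definition lunit_inv {C D} (p : bicom C D) : bmor p (bcomp (bid C) p) :=
  Bmor (p := p) (q := bcomp (bid C) p)
    (fun i => existT _ (bbase p i) (fun _ => exist _ i eq_refl))
    (fun i => eq_refl)
    (fun i d => projT2 d)
    (fun i d => eq_refl).

Definition runit {C D} (p : bicom C D) : bmor (bcomp p (bid D)) p :=
  Bmor (p := bcomp p (bid D)) (q := p)
    (fun x => projT1 x)
    (fun x => eq_refl)
    (fun x e => existT _ e tt)
    (fun x e => proj2_sig (projT2 x e)).

Definition runit_inv {C D} (p : bicom C D) : bmor p (bcomp p (bid D)) :=
  Bmor (p := p) (q := bcomp p (bid D))
    (fun i => existT _ i (fun e => exist _ (blab p i e) eq_refl))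
    (fun i => eq_refl)
    (fun i d => projT1 d)
    (fun i d => eq_refl).

Definition assoc {C D E F} (p : bicom C D) (q : bicom D E) (r : bicom E F)
  : bmor (bcomp (bcomp p q) r) (bcomp p (bcomp q r)) :=
  Bmor (p := bcomp (bcomp p q) r) (q := bcomp p (bcomp q r))
    (fun x => existT _ (projT1 (projT1 x))
       (fun e => exist _
          (existT _ (proj1_sig (projT2 (projT1 x) e))
                    (fun d => projT2 x (existT _ e d)))
          (proj2_sig (projT2 (projT1 x) e))))
    (fun x => eq_refl)
    (fun x z => existT _ (existT _ (projT1 z) (projT1 (projT2 z))) (projT2 (projT2 z)))
    (fun x z => eq_refl).

Definition assoc_inv {C D E F} (p : bicom C D) (q : bicom D E) (r : bicom E F)
  : bmor (bcomp p (bcomp q r)) (bcomp (bcomp p q) r) :=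
  Bmor (p := bcomp p (bcomp q r)) (q := bcomp (bcomp p q) r)
    (fun x => existT _
       (existT _ (projT1 x)
          (fun e => exist _ (projT1 (proj1_sig (projT2 x e))) (proj2_sig (projT2 x e))))
       (fun ed => projT2 (proj1_sig (projT2 x (projT1 ed))) (projT2 ed)))
    (fun x => eq_refl)
    (fun x z => existT _ (projT1 (projT1 z)) (existT _ (projT2 (projT1 z)) (projT2 z)))
    (fun x z => eq_refl).

(* Adjunction l -| r in Cat#, for l : (C y, D y)-bicomodule (prafunctor
   D-Set -> C-Set) and r : (D y, C y)-bicomodule; p <| q is composition of
   prafunctors p o q, so the unit is  D y => r <| l  and the counit is
   l <| r => C y, with the two triangle identities. *)
Definition is_adjunction {C D} (l : bicom C D) (r : bicom D C)
  (eta : bmor (bid D) (bcomp r l)) (eps : bmor (bcomp l r) (bid C)) : Prop :=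
  bmor_eq
    (bmcomp (runit_inv l)
    (bmcomp (whiskerL l eta)
    (bmcomp (assoc_inv l r l)
    (bmcomp (whiskerR eps l)
            (lunit l))))) (bmid l)
  /\
  bmor_eq
    (bmcomp (lunit_inv r)
    (bmcomp (whiskerR eta r)
    (bmcomp (assoc r l r)
    (bmcomp (whiskerL r eps)
            (runit r))))) (bmid r).

Definition adjoint {C D} (l : bicom C D) (r : bicom D C) : Prop :=
  exists eta eps, is_adjunction l r eta eps.

(* The dual m^v := [m, bot]_{C y, D y}, bot = C D y the terminal span, with the
   local internal hom written out for discrete categories: over c : C, a
   position is a map m_c -> bot_c, i.e. a choice of a direction of every
   position of m over c; its directions are the positions of m over c, the
   one for i being labelled by the label of the chosen direction of i. *)
Definition bdual {C D} (p : bicom C D) : bicom C D :=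
  Bicom { c : C & forall i : { i : bpos p | bbase p i = c }, bdir p (proj1_sig i) }
        (fun x => projT1 x)
        (fun x => { i : bpos p | bbase p i = projT1 x })
        (fun x i => blab p (proj1_sig i) (projT2 x i)).

(* Main.v *)
Require Import Defs.
From Stdlib Require Import ProofIrrelevance FunctionalExtensionality.

Section P1.
Context {C D : Type} (S : span C D).
Definition R0 : bicom D C :=
  Bicom D (fun d => d) (fun d => {m : apex S | sright S m = d}) (fun d m => sleft S (proj1_sig m)).
Definition eta0 : bmor (bid D) (bcomp R0 (linear S)) :=
  Bmor (p := bid D) (q := bcomp R0 (linear S))
   (fun d => existT _ d (fun e => exist (fun j => sleft S j = sleft S (proj1_sig e)) (proj1_sig e) eq_refl))
   (fun d => eq_refl) (fun d _ => tt) (fun d e => eq_sym (proj2_sig (projT1 e))).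
Definition eps0 : bmor (bcomp (linear S) R0) (bid C) :=
  Bmor (p := bcomp (linear S) R0) (q := bid C)
   (fun x => sleft S (projT1 x)) (fun x => eq_refl)
   (fun x _ => existT (fun e => bdir R0 (proj1_sig (projT2 x e))) tt (exist _ (projT1 x) (eq_sym (proj2_sig (projT2 x tt)))))
   (fun x e => eq_refl).
Lemma adj0 : is_adjunction (linear S) R0 eta0 eps0.
Proof.
  split.
  - exists (fun _ => eq_refl). intros i []. simpl. reflexivity.
  - exists (fun _ => eq_refl). intros i e. simpl. destruct e. simpl. f_equal. apply proof_irrelevance.
Qed.
End P1.

Lemma tr_projT1 {A} (P : A -> Type) (Q : A -> Type) (x y : sigT P) (H : x = y) e :
  eq_rect x (fun z => Q (projT1 z)) e y H = eq_rect (projT1 x) Q e (projT1 y) (f_equal (@projT1 _ _) H).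
Proof. destruct H. reflexivity. Qed.

Section P3.
Context {C D : Type} (S : span C D).
Definition K1 := bdual (linear S).
Definition L0 := linear (transpose S).
Definition eta1 : bmor (bid C) (bcomp K1 L0) :=
  Bmor (p := bid C) (q := bcomp K1 L0)
   (fun c => existT _ (existT _ c (fun _ => tt) : bpos K1)
       (fun e => exist (fun j => sright S j = sright S (proj1_sig e)) (proj1_sig e) eq_refl))
   (fun c => eq_refl) (fun c _ => tt) (fun c d => eq_sym (proj2_sig (projT1 d))).
Definition eps1 : bmor (bcomp L0 K1) (bid D) :=
  Bmor (p := bcomp L0 K1) (q := bid D)
   (fun x => sright S (projT1 x)) (fun x => eq_refl)
   (fun x _ => existT (fun e => bdir K1 (proj1_sig (projT2 x e))) tt
        (exist _ (projT1 x) (eq_sym (proj2_sig (projT2 x tt)))))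
   (fun x e => eq_refl).
Lemma adj1 : is_adjunction L0 K1 eta1 eps1.
Proof.
  split.
  - exists (fun _ => eq_refl). intros i []. simpl. reflexivity.
  - simpl.
    unshelve eexists.
    + intros [c t]. simpl. f_equal. apply functional_extensionality_dep. intros x. destruct (t x). reflexivity.
    + intros [c t] e. simpl in *.
      match goal with |- context [eq_rect _ _ _ _ ?H] => generalize H end.
      intros H.
      rewrite (tr_projT1 _ (fun c0 => {i : apex S | sleft S i = c0})).
      simpl. match goal with |- context [f_equal ?F H] => rewrite (proof_irrelevance (c = c) (f_equal F H) eq_refl) end. simpl.
      destruct e. simpl. f_equal. apply proof_irrelevance.
Qed.
End P3.

Section P2.
Context {C D : Type} (S : span C D) (R : bicom D C)
  (eta : bmor (bid D) (bcomp R (linear S))) (eps : bmor (bcomp (linear S) R) (bid C))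
  (A : is_adjunction (linear S) R eta eps).

Definition rr d : bpos R := projT1 (mpos eta d).
Definition pf d : bbase R (rr d) = d := mbase eta d.
Definition phi d (e : bdir R (rr d)) : apex S := proj1_sig (projT2 (mpos eta d) e).
Definition phil d e : d = sright S (phi d e) :=
  mlab eta d (existT (fun _ => unit) e tt).
Definition phir d e : sleft S (phi d e) = blab R (rr d) e :=
  proj2_sig (projT2 (mpos eta d) e).
Definition epsx m j (p : bbase R j = sright S m) : bpos (bcomp (linear S) R) :=
  existT (fun x0 : apex S => unit -> {j : bpos R | bbase R j = sright S x0}) m
    (fun _ => exist _ j p).
Definition eps' m j (p : bbase R j = sright S m) : bdir R j :=
  projT2 (mdir eps (epsx m j p) tt).
Definition epsl m j p : sleft S m = blab R j (eps' m j p) :=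
  eq_sym (eq_trans (mlab eps (epsx m j p) tt) (mbase eps (epsx m j p))).

Lemma eps_pi m j p p' : eps' m j p = eps' m j p'.
Proof. destruct (proof_irrelevance _ p p'); reflexivity. Qed.

Lemma eps_gen m j (P : unit -> bbase R j = sright S m) :
  projT2 (mdir eps (existT (fun x0 : apex S => unit -> {j : bpos R | bbase R j = sright S x0}) m (fun u => exist _ j (P u))) tt) = eps' m j (P tt).
Proof.
  pose (p0 := P tt). assert (HP : P = fun _ => p0).
  { apply functional_extensionality. intros []. reflexivity. }
  rewrite HP. reflexivity.
Qed.

Lemma tri1 m : phi (sright S m) (eps' m (rr (sright S m)) (pf (sright S m))) = m.
Proof. destruct A as [[H1 E1] _]. exact (H1 m). Qed.

Lemma tri2p i : rr (bbase R i) = i.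
Proof. destruct A as [_ [H2 E2]]. exact (H2 i). Qed.

Lemma tri2 i e p : eps' (phi (bbase R i) e) i p = eq_rect _ (bdir R) e i (tri2p i).
Proof.
  destruct A as [_ [H2 E2]]. simpl in E2. pose proof (E2 i e) as E.
  rewrite (eps_pi _ _ p (eq_trans (@eq_refl _ (bbase R i)) (mlab eta (bbase R i) (existT (fun _ => unit) e tt)))).
  refine (eq_trans (eq_sym (eps_gen (phi (bbase R i) e) i (fun d => eq_trans (@eq_refl _ (bbase R i)) (mlab eta (bbase R i) (existT (fun _ => unit) e d))))) _).
  etransitivity; [exact E|].
  f_equal. apply proof_irrelevance.
Qed.

Lemma fib_sub d (a b : {i : bpos R | bbase R i = d}) : a = b.
Proof.
  assert (forall a : {i : bpos R | bbase R i = d}, a = exist _ (rr d) (pf d)).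
  { intros [i p]. subst d. generalize (pf (bbase R i)). rewrite tri2p. intros.
    f_equal. apply proof_irrelevance. }
  rewrite (H a), (H b). reflexivity.
Qed.

Definition Fm_X : bmor (linear (transpose S)) (bdual R) :=
  Bmor (p := linear (transpose S)) (q := bdual R)
    (fun m => existT _ (sright S m) (fun i => eps' m (proj1_sig i) (proj2_sig i)))
    (fun m => eq_refl) (fun m _ => tt)
    (fun m i => epsl m (proj1_sig i) (proj2_sig i)).

Definition Gm_X : bmor (bdual R) (linear (transpose S)) :=
  Bmor (p := bdual R) (q := linear (transpose S))
    (fun x => phi (projT1 x) (projT2 x (exist _ (rr (projT1 x)) (pf (projT1 x)))))
    (fun x => eq_sym (phil _ _))
    (fun x _ => exist _ (rr (projT1 x)) (pf (projT1 x)))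
    (fun x _ => eq_sym (phir _ _)).

Lemma rew_fun d d' (p : d = d') (tau : forall i : {i : bpos R | bbase R i = d}, bdir R (proj1_sig i))
  (i : {i : bpos R | bbase R i = d'}) :
  eq_rect d (fun c => forall i : {i : bpos R | bbase R i = c}, bdir R (proj1_sig i)) tau d' p i
  = tau (exist _ (proj1_sig i) (eq_trans (proj2_sig i) (eq_sym p))).
Proof. destruct p. destruct i. reflexivity. Qed.

Lemma sig_tr d (sigma : forall i : {i : bpos R | bbase R i = d}, bdir R (proj1_sig i)) a b pa pb (h : a = b) :
  eq_rect a (bdir R) (sigma (exist _ a pa)) b h = sigma (exist _ b pb).
Proof. destruct h. simpl. rewrite (proof_irrelevance _ pa pb). reflexivity. Qed.

Lemma iso2 : biso (linear (transpose S)) (bdual R).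
Proof.
  exists Fm_X, Gm_X. split.
  - exists tri1. intros i e. destruct (mdir _ _ _), (mdir _ _ _). reflexivity.
  - unshelve eexists.
    + intros [d sigma]. simpl.
      apply eq_existT_uncurried. exists (eq_sym (phil _ _)).
      apply functional_extensionality_dep. intros i.
      rewrite rew_fun. destruct i as [j pj]. simpl. subst d.
      rewrite (tri2 j). apply sig_tr.
    + intros x e. apply fib_sub.
Qed.
End P2.

Section P4.
Context {C D : Type} (S : span C D) (L : bicom D C)
  (eta : bmor (bid C) (bcomp (bdual (linear S)) L)) (eps : bmor (bcomp L (bdual (linear S))) (bid D))
  (A : is_adjunction L (bdual (linear S)) eta eps).

Let K := bdual (linear S).
Definition Kpos := bpos K.
Definition kk c : Kpos := projT1 (mpos eta c).
Definition kb c : projT1 (kk c) = c := mbase eta c.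
Definition psi c (e : {i : apex S | sleft S i = projT1 (kk c)}) : bpos L := proj1_sig (projT2 (mpos eta c) e).
Definition psib c e : bbase L (psi c e) = sright S (proj1_sig e) := proj2_sig (projT2 (mpos eta c) e).
Definition psil c e d : c = blab L (psi c e) d := mlab eta c (existT _ e d).
Definition Ycan l := fun e => exist (fun j : Kpos => projT1 j = blab L l e) (kk (blab L l e)) (kb (blab L l e)).
Definition xc l : bpos (bcomp L K) := existT _ l (Ycan l).
Definition el l : bdir L l := projT1 (mdir eps (xc l) tt).
Definition ml l : apex S := proj1_sig (projT2 (mdir eps (xc l) tt)).
Definition mlp l : sleft S (ml l) = projT1 (kk (blab L l (el l))) := proj2_sig (projT2 (mdir eps (xc l) tt)).
Definition mlg l : sright S (ml l) = bbase L l := eq_trans (mlab eps (xc l) tt) (mbase eps (xc l)).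
Definition mOf l (Y : forall e : bdir L l, {j : Kpos | projT1 j = blab L l e}) : apex S :=
  proj1_sig (projT2 (mdir eps (existT _ l Y) tt)).

Lemma Kfib_sub c (a b : {j : Kpos | projT1 j = c}) : a = b.
Proof.
  destruct a as [[c1 t1] p1], b as [[c2 t2] p2]. simpl in p1, p2. subst c1 c2.
  assert (t1 = t2). { apply functional_extensionality_dep. intros x. destruct (t1 x), (t2 x). reflexivity. }
  subst t2. reflexivity.
Qed.

Lemma mOf_ind l Y Y' : mOf l Y = mOf l Y'.
Proof.
  assert (Y = Y'). { apply functional_extensionality_dep. intros. apply Kfib_sub. }
  subst. reflexivity.
Qed.

Lemma tr_proj1 (x y : Kpos) (H : x = y) e :
  proj1_sig (eq_rect x (fun x => {i0 : apex S | sleft S i0 = projT1 x}) e y H) = proj1_sig e.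
Proof. destruct H. reflexivity. Qed.

Lemma tri2' c (e : {i : apex S | sleft S i = projT1 (kk c)}) Y : mOf (psi c e) Y = proj1_sig e.
Proof.
  destruct A as [_ [H2 E2]]. simpl in E2.
  pose proof (E2 (existT _ c (fun _ => tt)) e) as E. simpl in E.
  apply (f_equal (@proj1_sig _ _)) in E.
  etransitivity; [| exact (tr_proj1 _ _ (H2 (existT _ c (fun _ => tt))) e)].
  etransitivity; [| exact E]. exact (mOf_ind (psi c e) Y _).
Qed.

Lemma psi_congr c c' (q : c = c') e e' : proj1_sig e = proj1_sig e' -> psi c e = psi c' e'.
Proof.
  destruct q. intros h. assert (e = e'). { destruct e, e'. simpl in h. subst. f_equal. apply proof_irrelevance. }
  subst. reflexivity.
Qed.

Definition Fm4 : bmor (linear (transpose S)) L :=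
  Bmor (p := linear (transpose S)) (q := L)
   (fun m => psi (sleft S m) (exist _ m (eq_sym (kb (sleft S m)))))
   (fun m => psib _ _) (fun m _ => tt) (fun m d => psil _ _ d).

Definition Gm4 : bmor L (linear (transpose S)) :=
  Bmor (p := L) (q := linear (transpose S))
   (fun l => ml l) (fun l => mlg l) (fun l _ => el l)
   (fun l _ => eq_sym (eq_trans (mlp l) (kb _))).

Lemma rew_trans {X} (P : X -> Type) a b c (p : a = b) (q : b = c) (y : P a) :
  eq_rect a P y c (eq_trans p q) = eq_rect b P (eq_rect a P y b p) c q.
Proof. destruct q, p. reflexivity. Qed.

Lemma iso4 : biso (linear (transpose S)) L.
Proof.
  exists Fm4, Gm4. split.
  - unshelve eexists.
    + intros m. simpl. unfold ml. apply tri2'.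
    + intros i e. destruct (mdir _ _ _), (mdir _ _ _). reflexivity.
  - destruct A as [[H1 E1] _]. simpl in H1, E1.
    unshelve eexists.
    + intros l. simpl. refine (eq_trans _ (H1 l)).
      apply psi_congr. exact (eq_trans (mlp l) (kb _)). reflexivity.
    + intros l e. simpl. rewrite rew_trans. apply E1.
Qed.
End P4.

Theorem corollary2p53 (C D : Type) (S : span C D) :
  (* (ii): the right adjoint of M y exists, and its dual is the transpose span *)
  (exists R : bicom D C, adjoint (linear S) R) /\
  (forall R : bicom D C, adjoint (linear S) R ->
     biso (linear (transpose S)) (bdual R)) /\
  (* (iii): the left adjoint of (M y)^v exists, and it is the transpose span *)
  (exists L : bicom D C, adjoint L (bdual (linear S))) /\
  (forall L : bicom D C, adjoint L (bdual (linear S)) ->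
     biso (linear (transpose S)) L).
Proof.
  split; [|split; [|split]].
  - exists (R0 S). exists (eta0 S), (eps0 S). apply adj0.
  - intros R [eta [eps A]]. exact (iso2 S R eta eps A).
  - exists (L0 S). exists (eta1 S), (eps1 S). apply adj1.
  - intros L [eta [eps A]]. exact (iso4 S L eta eps A).
Qed.
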